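(* Let $n \ge 1$ (the number of clients in a secure-aggregation shard), $d\ge 1$, $m \ge 2$ be integers, and let $\varepsilon>0$, $\Delta>0$. Set $\alpha = 1/n$ and $\beta = e^{-\varepsilon/\Delta}$. For each input tuple $v=(v_1,\dots,v_n)$ of integer vectors $v_i\in\mathbb{Z}^d$, define the randomized mechanism $$\mathcal{M}(v) = \left(\sum_{i=1}^{n} \big( (v_i + X_i - Y_i) \bmod m\big)\right) \bmod m \;\in\; \mathbb{Z}_m^d,$$ where all $X_i, Y_i\in\mathbb{Z}_{\ge 0}^d$ have mutually independent coordinates, each distributed as Pólya$(\alpha,\beta)$, independent of the input, and ''$\bmod\ m$'' is applied entrywise. Call two input tuples $v, v'$ neighboring if they differ in exactly one index $j$ and $\|v_j - v'_j\|_1 \le \Delta$. Then $\mathcal{M}$ is $\varepsilon$-differentially private: for all neighboring $v,v'$ and every set $S\subseteq \mathbb{Z}_m^d$, $\Pr[\mathcal{M}(v)\in S]\le e^{\varepsilon}\Pr[\mathcal{M}(v')\in S]$.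
   Context: A random variable $X$ is Pólya$(\alpha,\beta)$ with $\alpha>0$, $\beta\in(0,1)$ if $X$ takes values in $\mathbb{Z}_{\ge 0}$ with $P(X=k) = \binom{\alpha+k-1}{\alpha-1}\beta^k(1-\beta)^\alpha$, where the generalized binomial coefficient is defined via Gamma functions, $\binom{\alpha+k-1}{\alpha-1} = \frac{\Gamma(\alpha+k)}{\Gamma(\alpha)\,k!}$. Equivalently, $X$ is obtained by drawing $\lambda\sim\mathrm{Gamma}(\alpha,\beta/(1-\beta))$ (shape $\alpha$, scale $\beta/(1-\beta)$) and then $X\sim\mathrm{Poisson}(\lambda)$. For an integer $a$, $a \bmod m$ denotes the representative in $\{0,\dots,m-1\}$. *)

(* Defs.v *)
From HB Require Import structures.
From mathcomp Require Import all_boot all_order all_algebra.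
From mathcomp Require Import all_classical all_reals all_analysis.
Set Implicit Arguments. Unset Strict Implicit. Unset Printing Implicit Defensive.
Import Order.TTheory GRing.Theory Num.Theory.
Local Open Scope ring_scope.

(* Generalized binomial coefficient binom(a+k-1, a-1) = Gamma(a+k)/(Gamma(a) k!),
   written via the identity Gamma(a+k)/Gamma(a) = a(a+1)...(a+k-1). *)
Definition gbinom {R : realType} (a : R) (k : nat) : R :=
  (\prod_(i < k) (a + i%:R)) / (k`!)%:R.

Definition polya_pmf {R : realType} (a b : R) (k : nat) : R :=
  gbinom a k * b ^+ k * powR (1 - b) a.

Definition noise (n d : nat) := (('I_n -> 'I_d -> nat) * ('I_n -> 'I_d -> nat))%type.

Definition noise_pmf {R : realType} (n d : nat) (a b : R) (XY : noise n d) : R :=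
  \prod_(i < n) \prod_(j < d) (polya_pmf a b (XY.1 i j) * polya_pmf a b (XY.2 i j)).

Definition mech (n d : nat) (m : int) (v : 'I_n -> 'I_d -> int) (XY : noise n d)
  : 'I_d -> int :=
  fun j => ((\sum_(i < n) ((v i j + (XY.1 i j)%:Z - (XY.2 i j)%:Z) %% m)%Z) %% m)%Z.

Definition mech_prob {R : realType} (n d : nat) (m : int) (a b : R)
  (v : 'I_n -> 'I_d -> int) (S : set ('I_d -> int)) : \bar R :=
  \esum_(XY in [set XY : noise n d | S (mech m v XY)]) (noise_pmf a b XY)%:E.

Definition neighboring {R : realType} (n d : nat) (Delta : R)
  (v v' : 'I_n -> 'I_d -> int) : Prop :=
  exists j : 'I_n, (forall i, i != j -> v i = v' i) /\ v j <> v' j /\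
    ((\sum_(k < d) `|v j k - v' j k|)%:~R <= Delta).

(* Main.v *)
Require Import Defs.
From HB Require Import structures.
From mathcomp Require Import all_boot all_order all_algebra.
From mathcomp Require Import all_classical all_reals all_analysis.
From mathcomp Require Import ring lra zify.
Import Order.TTheory GRing.Theory Num.Theory.
Module MA.
Local Open Scope ring_scope.
Local Open Scope classical_set_scope.
Local Open Scope ereal_scope.

Section esumgen.
Variables (R : realType) (T : choiceType).
Implicit Types (a : T -> \bar R) (D : set T).

Lemma esumZ_le D a (c : R) : (0 <= c)%R -> (forall x, D x -> 0 <= a x) ->
  \esum_(x in D) (c%:E * a x) <= c%:E * \esum_(x in D) a x.
Proof.
move=> c0 a0; apply: ge_ereal_sup => _ [X [finX XD] <-].
rewrite fsbig_finite// big_seq -ge0_sume_distrr; last first.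
  by move=> i; rewrite in_fset_set// inE => /XD/a0.
rewrite lee_wpmul2l// ?lee_fin// -big_seq -fsbig_finite//.
by apply: ereal_sup_ubound; exists X.
Qed.

Lemma esumZ D a (c : R) : (0 <= c)%R -> (forall x, D x -> 0 <= a x) ->
  \esum_(x in D) (c%:E * a x) = c%:E * \esum_(x in D) a x.
Proof.
move=> c0 a0; apply/eqP; rewrite eq_le esumZ_le//=.
have [->|cn0] := eqVneq c 0%R.
  by rewrite mul0e esum_ge0// => x Dx; rewrite mul0e.
have cp : (0 < c)%R by rewrite lt_def cn0.
have ci : (0 <= c^-1)%R by rewrite invr_ge0 ltW.
have H := @esumZ_le D (fun x => c%:E * a x) c^-1 ci
  (fun x Dx => mule_ge0 (ltW (cp : (0 < c%:E)))(a0 x Dx)).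
have E : \esum_(x in D) (c^-1%:E * (c%:E * a x)) = \esum_(x in D) a x.
  by apply: eq_esum => x _; rewrite muleA -EFinM mulVf// mul1e.
rewrite E in H.
rewrite -(@lee_pmul2l _ c^-1%:E)// ?lte_fin ?invr_gt0// muleA -EFinM mulVf// mul1e.
exact: H.
Qed.

Lemma esum_subset D1 D2 a : D1 `<=` D2 -> (forall x, D2 x -> 0 <= a x) ->
  \esum_(x in D1) a x <= \esum_(x in D2) a x.
Proof.
move=> sD a0; rewrite esum_mkcond [leRHS]esum_mkcond; apply: le_esum => x _.
case: ifPn => [/set_mem/sD/mem_set ->//|_]; case: ifPn => // /set_mem; exact: a0.
Qed.

End esumgen.

End MA.
Import MA.

Module MB.
Local Open Scope ring_scope.

Section gb.
Variable R : realType.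
Implicit Types a c : R.

Lemma gbinom0 a : gbinom a 0 = 1.
Proof. by rewrite /gbinom big_ord0 fact0 divr1. Qed.

Lemma gbinomS a t : gbinom a t.+1 * t.+1%:R = gbinom a t * (a + t%:R).
Proof.
rewrite /gbinom big_ord_recr /= factS natrM.
have h1 : (t.+1%:R : R) != 0 by rewrite pnatr_eq0.
have h2 : (t`!%:R : R) != 0 by rewrite pnatr_eq0 -lt0n fact_gt0.
by field; apply/andP; split.
Qed.

Lemma gbinomSE a t : gbinom a t.+1 = gbinom a t * (a + t%:R) / t.+1%:R.
Proof.
have h1 : (t.+1%:R : R) != 0 by rewrite pnatr_eq0.
by rewrite -gbinomS mulfK.
Qed.

Lemma gbinom_ge0 a t : 0 <= a -> 0 <= gbinom a t.
Proof.
move=> a0; elim: t => [|t IH]; first by rewrite gbinom0.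
rewrite gbinomSE divr_ge0// mulr_ge0// addr_ge0//.
Qed.

Lemma gbinom0S t : gbinom (0:R) t.+1 = 0.
Proof. by elim: t => [|t IH]; rewrite gbinomSE ?gbinom0 ?IH ?add0r ?mul0r ?mulr0 ?mul0r. Qed.

Lemma gbinom1 t : gbinom (1:R) t = 1.
Proof.
elim: t => [|t IH]; first by rewrite gbinom0.
by rewrite gbinomSE IH mul1r -natr1 addrC divff// pnatr_eq0.
Qed.

Definition vdm a c s := \sum_(k < s.+1) gbinom a k * gbinom c (s - k).

Lemma vdmS a c s : vdm a c s.+1 * s.+1%:R = vdm a c s * (a + c + s%:R).
Proof.
rewrite /vdm.
have -> : (\sum_(k < s.+2) gbinom a k * gbinom c (s.+1 - k)) * s.+1%:R =
  \sum_(k < s.+2) (gbinom a k * gbinom c (s.+1 - k) * k%:R) +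
  \sum_(k < s.+2) (gbinom a k * gbinom c (s.+1 - k) * (s.+1 - k)%:R).
  rewrite big_distrl -big_split /=; apply: eq_bigr => k _.
  rewrite -mulrDr -natrD subnKC //; exact: (ltn_ord k).
rewrite big_ord_recl /= mulr0 add0r [X in _ + X]big_ord_recr /= subnn mulr0 addr0.
rewrite -big_split big_distrl /=; apply: eq_bigr => i _.
rewrite /bump leq0n add1n subSS mulrAC gbinomS.
have hi : (i <= s)%N by rewrite -ltnS ltn_ord.
rewrite subSn // -mulrA gbinomS natrB //.
ring.
Qed.

Lemma vdmE a c s : vdm a c s = gbinom (a + c) s.
Proof.
elim: s => [|s IH]; first by rewrite /vdm big_ord1 !gbinom0 mulr1.
have h1 : (s.+1%:R : R) != 0 by rewrite pnatr_eq0.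
by rewrite -[LHS](mulfK h1) vdmS IH -gbinomS mulfK.
Qed.

End gb.

Section polya.
Variable R : realType.
Variable b : R.
Hypothesis b0 : 0 < b.
Hypothesis b1 : b < 1.

Lemma polya_ge0 (a : R) t : 0 <= a -> 0 <= polya_pmf a b t.
Proof.
move=> a0; rewrite /polya_pmf; apply: mulr_ge0; last exact: powR_ge0.
apply: mulr_ge0; first exact: gbinom_ge0.
exact/exprn_ge0/ltW.
Qed.

Lemma polya0 t : polya_pmf 0 b t = if t == 0%N then 1 else 0.
Proof.
rewrite /polya_pmf powRr0 mulr1; case: t => [|t] /=.
  by rewrite gbinom0 expr0 mulr1.
by rewrite gbinom0S !mul0r.
Qed.

Lemma polya1S t : polya_pmf 1 b t.+1 = b * polya_pmf 1 b t.
Proof. by rewrite /polya_pmf !gbinom1 exprS; ring. Qed.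

Lemma polya_conv (a c : R) s : 0 <= a -> 0 <= c ->
  \sum_(k < s.+1) polya_pmf a b k * polya_pmf c b (s - k) = polya_pmf (a + c) b s.
Proof.
move=> a0 c0; rewrite /polya_pmf -vdmE /vdm big_distrl big_distrl /=.
have hb : (1 - b) != 0 by rewrite subr_eq0 eq_sym lt_eqF.
rewrite powRD; last by rewrite hb implybT.
apply: eq_bigr => k _.
have hk : (k <= s)%N by rewrite -ltnS ltn_ord.
rewrite -[in b ^+ s](subnKC hk) exprD; ring.
Qed.

End polya.

End MB.
Import MB.

Module MC.
Local Open Scope ring_scope.
Local Open Scope classical_set_scope.
Local Open Scope ereal_scope.

Section conv.
Variable R : realType.
Variable b : R.
Hypothesis b0 : (0 < b)%R.
Hypothesis b1 : (b < 1)%R.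

Lemma esum_le_fin (u : nat -> \bar R) s : (forall k, 0 <= u k) ->
  \esum_(k in [set k | (k <= s)%N]) u k = \sum_(k < s.+1) u k.
Proof.
move=> u0; elim: s => [|s IH].
  rewrite big_ord1 (_ : [set k | (k <= 0)%N] = [set 0%N]) ?esum_set1//.
  by apply/seteqP; split => k /=; rewrite leqn0 => /eqP.
rewrite (esumID [set k | (k <= s)%N]) //.
rewrite (_ : _ `&` _ = [set k | (k <= s)%N]); last first.
  by apply/seteqP; split => k /= => [[]//|ks]; split => //; apply: leqW.
rewrite (_ : _ `&` _ = [set s.+1]); last first.
  apply/seteqP; split => k /=.
    by move=> [k1 /negP]; rewrite -ltnNge => k2; apply/eqP; rewrite eqn_leq k1 k2.
  by move=> ->; split => //; apply/negP; rewrite -ltnNge.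
by rewrite IH esum_set1 // [in RHS]big_ord_recr.
Qed.

Lemma conv2 (a c : R) (g : nat -> \bar R) : (0 <= a)%R -> (0 <= c)%R ->
  (forall t, 0 <= g t) ->
  \esum_(x in [set: nat]) \esum_(t in [set: nat])
     ((polya_pmf a b x * polya_pmf c b t)%:E * g (x + t)%N) =
  \esum_(s in [set: nat]) ((polya_pmf (a + c) b s)%:E * g s).
Proof.
move=> a0 c0 g0.
have pge0 (x t : nat) : 0 <= (polya_pmf a b x * polya_pmf c b t)%:E * g (x + t)%N.
  by rewrite mule_ge0 // lee_fin mulr_ge0 // polya_ge0 // ltW.
rewrite esum_esum //.
rewrite (reindex_esum ([set: nat] `*`` (fun s => [set k | (k <= s)%N]))
   _ (fun z => (z.2, z.1 - z.2)%N)); last first.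
  split.
  - by move=> z _.
  - move=> [s k] [s' k'] /[!inE] H1 H2 H3; case: H1 => _ ks; case: H2 => _ ks'; case: H3 => kk ss; simpl in *; subst k'.
    have : s = s' by rewrite -(subnKC ks) -(subnKC ks') ss.
    by move=> ->.
  - move=> [x t] _; exists (x + t, x)%N => /=; last by rewrite addKn.
    by split => //=; rewrite leq_addr.
rewrite -(@esum_esum _ _ _ [set: nat] (fun s => [set k | (k <= s)%N]) (fun s k => (polya_pmf a b k * polya_pmf c b (s - k))%:E *
   g (k + (s - k))%N)) /=; last by move=> *; apply: pge0.
apply: eq_esum => s _.
rewrite (eq_esum (b := fun k => (polya_pmf a b k * polya_pmf c b (s - k))%:E * g s));
  last by move=> k /= ks; rewrite subnKC.
rewrite esum_le_fin; last by move=> k; rewrite mule_ge0 // lee_fin mulr_ge0 // polya_ge0 // ltW.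
rewrite -ge0_sume_distrl; last by move=> *; rewrite lee_fin mulr_ge0 // polya_ge0 // ltW.
by rewrite sumEFin polya_conv.
Qed.

Definition consf n (a : nat) (x : 'I_n -> nat) : 'I_n.+1 -> nat :=
  fun i => if unlift ord0 i is Some j then x j else a.
Arguments consf {n}.

Lemma consf0 n a (x : 'I_n -> nat) : consf a x ord0 = a.
Proof. by rewrite /consf unlift_none. Qed.

Lemma consfS n a (x : 'I_n -> nat) j : consf a x (lift ord0 j) = x j.
Proof. by rewrite /consf liftK. Qed.

Lemma push (n : nat) (a : R) (g : nat -> \bar R) : (0 <= a)%R ->
  (forall t, 0 <= g t) ->
  \esum_(x in [set: 'I_n -> nat])
     ((\prod_(i < n) polya_pmf a b (x i))%:E * g (\sum_(i < n) x i)%N) =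
  \esum_(t in [set: nat]) ((polya_pmf (n%:R * a) b t)%:E * g t).
Proof.
move=> a0; elim: n g => [|n IH] g g0.
  rewrite mul0r (_ : [set: 'I_0 -> nat] = [set (fun _ => 0%N)]); last first.
    apply/seteqP; split => x //= _; apply: funext => -[] //.
  rewrite esum_set1; last by rewrite big_ord0 mul1e.
  rewrite big_ord0 big_ord0 mul1e (esumID [set 0%N]); last first.
    by move=> t _; rewrite polya0; case: eqP => _; rewrite ?mul1e ?mul0e.
  rewrite setTI esum_set1; last by rewrite polya0 /= mul1e.
  rewrite esum1 ?adde0; first by rewrite polya0 /= mul1e.
  by move=> t [_ /eqP t0]; rewrite polya0 (negPf t0) mul0e.
rewrite (reindex_esum ([set: nat] `*`` (fun=> [set: 'I_n -> nat])) _
  (fun z => consf z.1 z.2)); last first.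
  split.
  - by move=> z _.
  - move=> [x0 x] [y0 y] _ _ /= E.
    have e0 := congr1 (fun f => f ord0) E; rewrite /consf /= unlift_none in e0.
    rewrite e0; congr (_, _); apply: funext => j.
    by have := congr1 (fun f => f (lift ord0 j)) E; rewrite /consf /= liftK.
  - move=> y _; exists (y ord0, fun j => y (lift ord0 j)) => //=.
    apply: funext => i; rewrite /consf; case: unliftP => //= [j ->|->] //.
rewrite -(@esum_esum _ _ _ [set: nat] (fun=> [set: 'I_n -> nat])
  (fun x0 x => ((\prod_(i < n.+1) polya_pmf a b (consf x0 x i))%:E *
     g (\sum_(i < n.+1) consf x0 x i)%N))); last first.
  move=> x0 x _ _; rewrite mule_ge0 // lee_fin prodr_ge0 // => i _.
  exact: polya_ge0.
transitivity (\esum_(x0 in [set: nat]) \esum_(t in [set: nat])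
   ((polya_pmf a b x0 * polya_pmf (n%:R * a) b t)%:E * g (x0 + t)%N)); last first.
  rewrite conv2 //; last by rewrite mulr_ge0.
  by rewrite -natr1 mulrDl mul1r addrC.
apply: eq_esum => x0 _.
have -> : \esum_(x in [set: 'I_n -> nat])
   (\prod_(i < n.+1) polya_pmf a b (consf x0 x i))%:E *
     g (\sum_(i < n.+1) consf x0 x i)%N =
  \esum_(x in [set: 'I_n -> nat])
   (\prod_(i < n) polya_pmf a b (x i))%:E *
     ((polya_pmf a b x0)%:E * g (x0 + \sum_(i < n) x i)%N).
  apply: eq_esum => x _.
  rewrite big_ord_recl [X in g X]big_ord_recl !consf0.
  rewrite (eq_bigr (fun j => polya_pmf a b (x j))); last by move=> j _; rewrite consfS.
  rewrite (eq_bigr (fun j => x j)); last by move=> j _; rewrite consfS.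
  by rewrite EFinM [RHS]muleA [_ * (polya_pmf a b x0)%:E]muleC.
rewrite (IH (fun t => (polya_pmf a b x0)%:E * g (x0 + t)%N)); last first.
  by move=> t; rewrite mule_ge0 // lee_fin polya_ge0.
apply: eq_esum => t _.
by rewrite muleA -EFinM mulrC.
Qed.

Definition Qn (h : int -> \bar R) :=
  \esum_(s in [set: nat]) ((polya_pmf 1 b s)%:E *
     \esum_(t in [set: nat]) ((polya_pmf 1 b t)%:E * h (s%:Z - t%:Z)%R)).

Lemma Qn_ge0 h : (forall z, 0 <= h z) -> 0 <= Qn h.
Proof.
move=> h0; apply: esum_ge0 => s _; rewrite mule_ge0 ?lee_fin ?polya_ge0//.
by apply: esum_ge0 => t _; rewrite mule_ge0 ?lee_fin ?polya_ge0.
Qed.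

Lemma shiftP h : (forall z, 0 <= h z) ->
  Qn h <= (b^-1)%:E * Qn (fun z => h (z + 1)%R).
Proof.
move=> h0.
have bi : (0 < b^-1)%R by rewrite invr_gt0.
suff H : b%:E * Qn h <= Qn (fun z => h (z + 1)%R).
  rewrite -[leLHS]mul1e -(@mulVf _ b) ?gt_eqF // EFinM -muleA.
  by apply: lee_wpmul2l => //; rewrite lee_fin ltW.
rewrite /Qn -(@esumZ _ _ _ _ b (ltW b0)); last first.
  move=> s _; rewrite mule_ge0 ?lee_fin ?polya_ge0 //.
  by apply: esum_ge0 => t _; rewrite mule_ge0 ?lee_fin ?polya_ge0.
apply: le_esum => s _.
rewrite muleCA lee_wpmul2l ?lee_fin ?polya_ge0 //.
rewrite -(@esumZ _ _ _ _ b (ltW b0)); last by move=> t _; rewrite mule_ge0 ?lee_fin ?polya_ge0.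
have -> : \esum_(t in [set: nat]) (b%:E * ((polya_pmf 1 b t)%:E * h (s%:Z - t%:Z)%R)) =
  \esum_(t in [set: nat]) (fun j : nat => (polya_pmf 1 b j)%:E * h (s%:Z - j%:Z + 1)%R) t.+1.
  apply: eq_esum => t _ /=; rewrite polya1S EFinM muleA; congr (_ * _); congr h; lia.
rewrite -(esum_image _ S (fun j : nat => (polya_pmf 1 b j)%:E * h (s%:Z - j%:Z + 1)%R)) //; last by move=> x y _ _ [].
apply: esum_subset => // t _; rewrite mule_ge0 ?lee_fin ?polya_ge0 //.
Qed.

Lemma shiftN h : (forall z, 0 <= h z) ->
  Qn h <= (b^-1)%:E * Qn (fun z => h (z - 1)%R).
Proof.
move=> h0.
have bi : (0 < b^-1)%R by rewrite invr_gt0.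
have G0 (k : int) : 0 <= \esum_(t in [set: nat]) ((polya_pmf 1 b t)%:E * h (k - t%:Z)%R).
  by apply: esum_ge0 => t _; rewrite mule_ge0 ?lee_fin ?polya_ge0.
have G1 (k : int) : 0 <= \esum_(t in [set: nat]) ((polya_pmf 1 b t)%:E * h (k - t%:Z - 1)%R).
  by apply: esum_ge0 => t _; rewrite mule_ge0 ?lee_fin ?polya_ge0.
suff H : b%:E * Qn h <= Qn (fun z => h (z - 1)%R).
  rewrite -[leLHS]mul1e -(@mulVf _ b) ?gt_eqF // EFinM -muleA.
  by apply: lee_wpmul2l => //; rewrite lee_fin ltW.
rewrite /Qn -(@esumZ _ _ _ _ b (ltW b0)); last by move=> s _; rewrite mule_ge0 ?lee_fin ?polya_ge0.
have -> : \esum_(s in [set: nat]) (b%:E * ((polya_pmf 1 b s)%:E *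
     \esum_(t in [set: nat]) ((polya_pmf 1 b t)%:E * h (s%:Z - t%:Z)%R))) =
  \esum_(s in [set: nat]) (fun j : nat => (polya_pmf 1 b j)%:E *
     \esum_(t in [set: nat]) ((polya_pmf 1 b t)%:E * h (j%:Z - t%:Z - 1)%R)) s.+1.
  apply: eq_esum => s _ /=; rewrite polya1S EFinM muleA; congr (_ * _).
  by apply: eq_esum => t _; congr (_ * h _); lia.
rewrite -(esum_image _ S (fun j : nat => (polya_pmf 1 b j)%:E *
     \esum_(t in [set: nat]) ((polya_pmf 1 b t)%:E * h (j%:Z - t%:Z - 1)%R))) //; last by move=> x y _ _ [].
apply: esum_subset => // t _; rewrite mule_ge0 ?lee_fin ?polya_ge0 //.
Qed.

Lemma QE n (h : int -> \bar R) : (1 <= n)%N -> (forall z, 0 <= h z) ->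
  \esum_(xy in [set: ('I_n -> nat) * ('I_n -> nat)])
    ((\prod_(i < n) (polya_pmf (n%:R^-1)%R b (xy.1 i) * polya_pmf (n%:R^-1)%R b (xy.2 i)))%:E
      * h ((\sum_(i < n) xy.1 i)%N%:Z - (\sum_(i < n) xy.2 i)%N%:Z)%R) = Qn h.
Proof.
move=> n1 h0.
set a := (n%:R^-1)%R.
have a0 : (0 <= a)%R by rewrite invr_ge0.
have na : (n%:R * a = 1 :> R)%R by rewrite mulfV // pnatr_eq0 -lt0n.
have pf x : (0 <= \prod_(i < n) polya_pmf a b (x i))%R.
  by apply: prodr_ge0 => i _; apply: polya_ge0.
have pushA (g : nat -> \bar R) : (forall t, 0 <= g t) ->
  \esum_(x in [set: 'I_n -> nat])
     ((\prod_(i < n) polya_pmf a b (x i))%:E * g (\sum_(i < n) x i)%N) =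
  \esum_(t in [set: nat]) ((polya_pmf 1 b t)%:E * g t).
  by move=> g0; rewrite push // na.
rewrite (_ : [set: _] = [set: 'I_n -> nat] `*`` (fun=> [set: 'I_n -> nat]));
  last by apply/seteqP; split.
rewrite -(@esum_esum _ _ _ [set: 'I_n -> nat] (fun=> [set: 'I_n -> nat])
  (fun x y => (\prod_(i < n) (polya_pmf a b (x i) * polya_pmf a b (y i)))%:E
      * h ((\sum_(i < n) x i)%N%:Z - (\sum_(i < n) y i)%N%:Z)%R)); last first.
  by move=> x y _ _; rewrite mule_ge0 // lee_fin big_split mulr_ge0.
rewrite /Qn -(pushA (fun s => \esum_(t in [set: nat]) ((polya_pmf 1 b t)%:E * h (s%:Z - t%:Z)%R))) //; last first.
  by move=> s; apply: esum_ge0 => t _; rewrite mule_ge0 ?lee_fin ?polya_ge0.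
apply: eq_esum => x _.
transitivity (\esum_(y in [set: 'I_n -> nat]) ((\prod_(i < n) polya_pmf a b (y i))%:E *
  ((\prod_(i < n) polya_pmf a b (x i))%:E * h ((\sum_(i < n) x i)%N%:Z - (\sum_(i < n) y i)%N%:Z)%R))).
  apply: eq_esum => y _; rewrite big_split EFinM /= -muleA [in RHS]muleA.
  by rewrite [X in _ = X * _]muleC muleA.
rewrite (pushA (fun t => (\prod_(i < n) polya_pmf a b (x i))%:E * h ((\sum_(i < n) x i)%N%:Z - t%:Z)%R)) //; last first.
  by move=> t; rewrite mule_ge0 ?lee_fin.
rewrite -esumZ //; last by move=> t _; rewrite mule_ge0 ?lee_fin ?polya_ge0.
by apply: eq_esum => t _; rewrite muleCA.
Qed.

End conv.

End MC.
Import MC.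

Module MD.
Local Open Scope ring_scope.
Local Open Scope classical_set_scope.
Local Open Scope ereal_scope.

Section main.
Variables (R : realType) (n d : nat) (b : R).
Hypothesis b0 : (0 < b)%R.
Hypothesis b1 : (b < 1)%R.
Hypothesis n1 : (1 <= n)%N.
Let a : R := (n%:R^-1)%R.
Let a0 : (0 <= a)%R. Proof. by rewrite /a invr_ge0. Qed.

Definition U (XY : noise n d) (j : 'I_d) : int :=
  ((\sum_(i < n) XY.1 i j)%N%:Z - (\sum_(i < n) XY.2 i j)%N%:Z)%R.

Definition Phi (W : 'I_d -> int) (H : ('I_d -> int) -> \bar R) :=
  \esum_(XY in [set: noise n d]) ((noise_pmf a b XY)%:E * H (fun j => W j + U XY j)%R).

Definition setcol (k : 'I_d) (XY : noise n d) (x y : 'I_n -> nat) : noise n d :=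
  (fun i j => if j == k then x i else XY.1 i j,
   fun i j => if j == k then y i else XY.2 i j).

Definition restp k (XY : noise n d) : R :=
  \prod_(i < n) \prod_(j < d | j != k)
     (polya_pmf a b (XY.1 i j) * polya_pmf a b (XY.2 i j)).

Lemma restp_ge0 k XY : (0 <= restp k XY)%R.
Proof.
by apply: prodr_ge0 => i _; apply: prodr_ge0 => j _; rewrite mulr_ge0 ?polya_ge0.
Qed.

Lemma pmf_ge0 (XY : noise n d) : (0 <= noise_pmf a b XY)%R.
Proof.
by apply: prodr_ge0 => i _; apply: prodr_ge0 => j _; rewrite mulr_ge0 ?polya_ge0.
Qed.

Lemma pmf_setcol k XY x y : noise_pmf a b (setcol k XY x y) =
  (\prod_(i < n) (polya_pmf a b (x i) * polya_pmf a b (y i)) * restp k XY)%R.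
Proof.
rewrite /noise_pmf /restp -big_split /=; apply: eq_bigr => i _.
rewrite (bigD1 k) //= !eqxx; congr (_ * _)%R; apply: eq_bigr => j /negPf -> //.
Qed.

Lemma U_setcol k XY x y j : U (setcol k XY x y) j =
  if j == k then ((\sum_(i < n) x i)%N%:Z - (\sum_(i < n) y i)%N%:Z)%R else U XY j.
Proof. by rewrite /U /setcol /=; case: eqP. Qed.

Definition P0 k := [set XY : noise n d | forall i, XY.1 i k = 0%N /\ XY.2 i k = 0%N].

Lemma decomp k W H : (forall z, 0 <= H z) ->
  Phi W H = \esum_(XY in P0 k) @Qn R b (fun t => (restp k XY)%:E *
     H (fun j => if j == k then (W k + t)%R else (W j + U XY j)%R)).
Proof.
move=> H0.
rewrite /Phi (reindex_esum (P0 k `*`` (fun=> [set: ('I_n -> nat) * ('I_n -> nat)])) _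
  (fun z => setcol k z.1 z.2.1 z.2.2)); last first.
  split.
  - by move=> z _.
  - move=> [XY [x y]] [XY' [x' y']] Q1 Q2 E.
    move: Q1 Q2; rewrite !inE => -[/= P1 _] [/= P2 _].
    have E1 := congr1 fst E; have E2 := congr1 snd E; simpl in E1, E2.
    have ex : x = x'.
      by apply: funext => i; have := congr1 (fun F => F i k) E1; rewrite /= eqxx.
    have ey : y = y'.
      by apply: funext => i; have := congr1 (fun F => F i k) E2; rewrite /= eqxx.
    have eX : XY.1 = XY'.1.
      apply: funext => i; apply: funext => j; case: (eqVneq j k) => [->|jk].
        by rewrite (P1 i).1 (P2 i).1.
      by have := congr1 (fun F => F i j) E1; rewrite /= (negPf jk).
    have eY : XY.2 = XY'.2.
      apply: funext => i; apply: funext => j; case: (eqVneq j k) => [->|jk].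
        by rewrite (P1 i).2 (P2 i).2.
      by have := congr1 (fun F => F i j) E2; rewrite /= (negPf jk).
    by move: eX eY; case: XY {E E1 E2 P1} => X Y; case: XY' {P2} => X' Y' /= -> ->; rewrite ex ey.
  - move=> XY _.
    exists ((fun i j => if j == k then 0%N else XY.1 i j,
             fun i j => if j == k then 0%N else XY.2 i j),
            (fun i => XY.1 i k, fun i => XY.2 i k)).
      by split => //; rewrite /P0 /= => i; rewrite eqxx.
    rewrite /setcol /=; case: XY => X Y /=; congr (_, _);
      apply: funext => i; apply: funext => j; by case: eqP => [->|].
rewrite -(@esum_esum _ _ _ (P0 k) (fun=> [set: ('I_n -> nat) * ('I_n -> nat)])
  (fun XY xy => (noise_pmf a b (setcol k XY xy.1 xy.2))%:E *
     H (fun j => W j + U (setcol k XY xy.1 xy.2) j)%R)); last first.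
  by move=> XY xy _ _; rewrite mule_ge0 ?lee_fin ?pmf_ge0.
apply: eq_esum => XY _.
rewrite -(@QE R b b0 b1 n) //; last by move=> z; rewrite mule_ge0 ?lee_fin ?restp_ge0.
apply: eq_esum => xy _.
rewrite pmf_setcol EFinM -muleA; congr (_ * (_ * H _)).
by apply: funext => j; rewrite U_setcol; case: eqP => [->|].
Qed.

Lemma Phi_ge0 W H : (forall z, 0 <= H z) -> 0 <= Phi W H.
Proof. by move=> H0; apply: esum_ge0 => XY _; rewrite mule_ge0 ?lee_fin ?pmf_ge0. Qed.

Lemma step k W H (s : int) : (s = 1 \/ s = -1)%R -> (forall z, 0 <= H z) ->
  Phi W H <= (b^-1)%:E * Phi (fun j => if j == k then (W k + s)%R else W j) H.
Proof.
move=> hs H0.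
have bi : (0 <= b^-1)%R by rewrite invr_ge0 ltW.
have hge0 (XY : noise n d) W' : forall z : int, 0 <= (restp k XY)%:E *
     H (fun j => if j == k then (W' k + z)%R else (W' j + U XY j)%R).
  by move=> z; rewrite mule_ge0 ?lee_fin ?restp_ge0.
rewrite !(decomp k) // -esumZ //; last first.
  by move=> XY _; apply: Qn_ge0 => // z; rewrite mule_ge0 ?lee_fin ?restp_ge0.
apply: le_esum => XY _.
case: hs => ->.
  apply: (le_trans (@shiftP R b b0 b1 _ _)); first exact: hge0.
  rewrite le_eqVlt; apply/orP; left; apply/eqP; congr (_ * Qn _ _ _).
  apply: funext => t; congr (_ * H _); apply: funext => j.
  by case: eqP => _; rewrite ?eqxx; lia.
apply: (le_trans (@shiftN R b b0 b1 _ _)); first exact: hge0.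
rewrite le_eqVlt; apply/orP; left; apply/eqP; congr (_ * Qn _ _ _).
apply: funext => t; congr (_ * H _); apply: funext => j.
by case: eqP => _; rewrite ?eqxx; lia.
Qed.

Lemma chain H : (forall z, 0 <= H z) -> forall L W W',
  (\sum_(j < d) absz (W j - W' j)%R)%N = L ->
  Phi W H <= ((b^-1) ^+ L)%:E * Phi W' H.
Proof.
move=> H0 L; elim: L => [|L IH] W W' hL.
  have eW : W = W'.
    apply: funext => j; move: hL; rewrite (bigD1 j) //= => /eqP.
    by rewrite addn_eq0 => /andP[/eqP h _]; lia.
  by rewrite eW expr0 mul1e.
case: (boolP [exists k, W k != W' k]) => [/existsP [k hk]|]; last first.
  rewrite negb_exists => /forallP hall; move: hL.
  rewrite big1 // => j _; have := hall j; rewrite negbK => /eqP ->; lia.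
pose s : int := if (W k < W' k)%R then 1%R else (-1)%R.
pose W1 := fun j => if j == k then (W k + s)%R else W j.
have hs : (s = 1 \/ s = -1)%R by rewrite /s; case: ifP; [left|right].
have hL1 : (\sum_(j < d) absz (W1 j - W' j)%R)%N = L.
  move: hL; rewrite (bigD1 k) //= => hL; rewrite (bigD1 k) //=.
  rewrite /W1 eqxx.
  rewrite (eq_bigr (fun j => absz (W j - W' j)%R)); last first.
    by move=> j /negPf ->.
  move: hL hk; rewrite /s; case: ifP => hlt; lia.
apply: (le_trans (step k W H s hs H0)).
rewrite exprS EFinM -muleA; apply: lee_wpmul2l; first by rewrite lee_fin invr_ge0 ltW.
exact: IH.
Qed.

End main.

End MD.
Import MD.

Module ME.
Local Open Scope ring_scope.

Lemma modz_sum (k : nat) (m : int) (f : 'I_k -> int) :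
  ((\sum_(i < k) (f i %% m)%Z) %% m)%Z = ((\sum_(i < k) f i) %% m)%Z.
Proof.
elim: k f => [|k IH] f; first by rewrite !big_ord0.
rewrite !big_ord_recr /= -modzDml IH modzDm //.
Qed.

Lemma Posz_sum (k : nat) (F : 'I_k -> nat) :
  (\sum_(i < k) F i)%N%:Z = \sum_(i < k) (F i)%:Z.
Proof.
elim: k F => [|k IH] F; first by rewrite !big_ord0.
by rewrite !big_ord_recr /= PoszD IH.
Qed.

Lemma mechE (n d : nat) (m : int) (v : 'I_n -> 'I_d -> int)
  (XY : noise n d) :
  mech m v XY = fun j => ((\sum_(i < n) v i j + U n d XY j) %% m)%Z.
Proof.
apply: funext => j; rewrite /mech modz_sum /U !Posz_sum.
by rewrite !big_split /= sumrN addrA.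
Qed.

Local Open Scope classical_set_scope.
Local Open Scope ereal_scope.

Lemma mech_probE (R : realType) (n d : nat) (m : int) (b : R)
  (v : 'I_n -> 'I_d -> int) (S : set ('I_d -> int)) :
  mech_prob m (n%:R^-1)%R b v S =
  Phi R n d b (fun j => \sum_(i < n) v i j)%R
    (fun z => if (fun j => (z j %% m)%Z) \in S then 1 else 0).
Proof.
rewrite /mech_prob /Phi esum_mkcond; apply: eq_esum => XY _.
rewrite -mechE.
case: ifPn => [/set_mem h|h]; case: ifPn => [/set_mem h'|h'];
  rewrite ?mule1 ?mule0 //.
- by case/negP: h'; apply: mem_set.
- by case/negP: h; apply: mem_set.
Qed.


End ME.
Import ME.

Local Open Scope ring_scope.

Theorem mainTheorem1 (R : realType) (n d : nat) (m : int) (eps Delta : R) :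
  (1 <= n)%N -> (1 <= d)%N -> 2 <= m -> 0 < eps -> 0 < Delta ->
  forall (v v' : 'I_n -> 'I_d -> int), neighboring Delta v v' ->
  forall S : set ('I_d -> int),
    (mech_prob m (n%:R^-1) (expR (- (eps / Delta))) v S <=
     (expR eps)%:E * mech_prob m (n%:R^-1) (expR (- (eps / Delta))) v' S)%E.
Proof.
move=> n1 d1 m2 eps0 D0 v v' [j [hoth [hneq hsum]]] S.
set b := expR (- (eps / Delta)).
have b0 : (0 < b)%R by apply: expR_gt0.
have b1 : (b < 1)%R by rewrite expR_lt1 oppr_lt0 divr_gt0.
have bi : (b^-1 = expR (eps / Delta))%R by rewrite /b expRN invrK.
rewrite !mech_probE.
set H := fun z : 'I_d -> int => _.
set W := fun k => _; set W' := fun k => _.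
have H0 : forall z, (0 <= H z)%E by move=> z; rewrite /H; case: ifP.
pose L := (\sum_(k < d) absz (W k - W' k)%R)%N.
have hW k : (W k - W' k = v j k - v' j k)%R.
  rewrite /W /W' -sumrB (bigD1 j) //= big1 ?addr0 // => i ij.
  by rewrite hoth // subrr.
have hLD : (L%:R <= Delta)%R.
  move: hsum; congr (_ <= _)%R.
  rewrite /L; have -> : ((\sum_(k < d) absz (W k - W' k))%N%:R : R) = (((\sum_(k < d) absz (W k - W' k))%N)%:Z)%:~R by [].
  rewrite Posz_sum; congr (_%:~R); apply: eq_bigr => k _.
  by rewrite hW abszE.
apply: (le_trans (@chain R n d b b0 b1 n1 H H0 L W W' (erefl L))).
apply: lee_wpmul2r; first exact: Phi_ge0.
rewrite lee_fin bi -expRM_natl ler_expR.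
rewrite mulrA ler_pdivrMr //.
have : (0 <= L%:R :> R)%R by [].
nra.
Qed.
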